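(* Let $W$ be a channel from $\{1,2,3\}$ to $\{1,2\}$. If the six entries $W_{i,j}$ are pairwise distinct and each column sum of $W$ is at least $1$, then $\overline{C}_{01}(W)<\overline{C}_{11}(W)$.
   Context: A channel is a row-stochastic matrix. With $\mathcal{X}=\{1,2,3\}$, $\mathcal{Y}=\{1,2\}$, a deterministic channel is a 0-1 channel (a map $D:\mathcal{X}\to\mathcal{Y}$); $\mathcal{D}$ is the set of them, $\mathrm{rank}(D)$ the matrix rank. $\Lambda(W)=\{\lambda\text{ probability distribution on }\mathcal{D}: W=\sum_D\lambda_DD\}$. $I(\mu,K)=\sum_x\mu_xD(K_{x,*}\|\mu K)$ (KL divergence, base 2). $C_{11}(\lambda)=\sum_D\lambda_D\log_2\mathrm{rank}(D)$, $C_{01}(\lambda)=\max_\mu\sum_D\lambda_D I(\mu,D)$ over distributions $\mu$ on $\mathcal{X}$. $\overline{C}_f(W)=\sup_{\lambda\in\Lambda(W)}C_f(\lambda)$ for $f\in\{01,11\}$. *)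

(* Defs.v *)
From HB Require Import structures.
From mathcomp Require Import all_boot all_order all_algebra.
From mathcomp Require Import classical_sets reals exp.
Set Implicit Arguments. Unset Strict Implicit. Unset Printing Implicit Defensive.
Import Order.TTheory GRing.Theory Num.Theory.
Local Open Scope ring_scope.
Local Open Scope classical_set_scope.

Section Defs.
Variable R : realType.

Definition log2 (x : R) : R := ln x / ln 2.

(* channels X -> Y are row-stochastic matrices 'M[R]_(#X, #Y) *)
Definition stochastic_row {n : nat} (p : 'rV[R]_n) : Prop :=
  (forall j, 0 <= p 0 j) /\ \sum_j p 0 j = 1.

Definition is_channel {m n : nat} (W : 'M[R]_(m, n)) : Prop :=
  forall i, stochastic_row (row i W).

Definition is_distr {T : finType} (mu : {ffun T -> R}) : Prop :=
  (forall t, 0 <= mu t) /\ \sum_t mu t = 1.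

Definition detmap := {ffun 'I_3 -> 'I_2}.
Definition detmx (D : detmap) : 'M[R]_(3, 2) := \matrix_(x, y) (D x == y)%:R.

Definition KL {n : nat} (p q : 'rV[R]_n) : R :=
  \sum_j (if p 0 j == 0 then 0 else p 0 j * log2 (p 0 j / q 0 j)).

Definition outdist {m n : nat} (mu : {ffun 'I_m -> R}) (K : 'M[R]_(m, n)) : 'rV[R]_n :=
  \row_y \sum_x mu x * K x y.

Definition MI {m n : nat} (mu : {ffun 'I_m -> R}) (K : 'M[R]_(m, n)) : R :=
  \sum_x mu x * KL (row x K) (outdist mu K).

Definition Lambda (W : 'M[R]_(3, 2)) : set {ffun detmap -> R} :=
  [set lam | is_distr lam /\ W = \sum_D lam D *: detmx D].

Definition C11 (lam : {ffun detmap -> R}) : R :=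
  \sum_D lam D * log2 (\rank (detmx D))%:R.

Definition C01 (lam : {ffun detmap -> R}) : R :=
  sup [set \sum_D lam D * MI mu (detmx D) | mu in [set mu : {ffun 'I_3 -> R} | is_distr mu]].

Definition Cbar11 (W : 'M[R]_(3, 2)) : R := sup [set C11 lam | lam in Lambda W].
Definition Cbar01 (W : 'M[R]_(3, 2)) : R := sup [set C01 lam | lam in Lambda W].

End Defs.

(* Main.v *)
Require Import Defs.
From HB Require Import structures.
From mathcomp Require Import all_boot all_order all_algebra.
From mathcomp Require Import classical_sets reals exp.
From mathcomp Require Import ring lra.
Import Order.TTheory GRing.Theory Num.Theory.
Local Open Scope ring_scope.

Definition o0 : 'I_2 := @Ordinal 2 0 isT.
Definition o1 : 'I_2 := @Ordinal 2 1 isT.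
Definition x0 : 'I_3 := @Ordinal 3 0 isT.
Definition x1 : 'I_3 := @Ordinal 3 1 isT.
Definition x2 : 'I_3 := @Ordinal 3 2 isT.

Lemma sum2 (R : nmodType) (f : 'I_2 -> R) : \sum_i f i = f o0 + f o1.
Proof. rewrite big_ord_recl big_ord1. congr (f _ + f _); apply: val_inj; by []. Qed.
Lemma sum3 (R : nmodType) (f : 'I_3 -> R) : \sum_i f i = f x0 + f x1 + f x2.
Proof. rewrite big_ord_recl big_ord_recl big_ord1 addrA; congr (f _ + f _ + f _); apply: val_inj; by []. Qed.
Lemma I2_cases (i : 'I_2) : i = o0 \/ i = o1.
Proof. case: i => [[|[|n]] Hn]; [left|right|by []]; exact: val_inj. Qed.
Lemma I3_cases (i : 'I_3) : [\/ i = x0, i = x1 | i = x2].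
Proof. case: i => [[|[|[|n]]] Hn]; [apply: Or31|apply: Or32|apply: Or33|by []]; exact: val_inj. Qed.
Definition mk (u v w : 'I_2) : detmap := [ffun x : 'I_3 => if val x == 0%N then u else if val x == 1%N then v else w].
Lemma mk0 u v w : mk u v w x0 = u. Proof. by rewrite ffunE. Qed.
Lemma mk1 u v w : mk u v w x1 = v. Proof. by rewrite ffunE. Qed.
Lemma mk2 u v w : mk u v w x2 = w. Proof. by rewrite ffunE. Qed.
Lemma e00 : (o0 == o0) = true. Proof. by []. Qed.
Lemma e01 : (o0 == o1) = false. Proof. by []. Qed.
Lemma e10 : (o1 == o0) = false. Proof. by []. Qed.
Lemma e11 : (o1 == o1) = true. Proof. by []. Qed.

Lemma sumD (R : nmodType) (F : detmap -> R) :
  \sum_D F D = \sum_u \sum_v \sum_w F (mk u v w).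
Proof.
pose h (p : 'I_2 * 'I_2 * 'I_2) := mk p.1.1 p.1.2 p.2.
pose g (D : detmap) := (D x0, D x1, D x2).
rewrite (reindex h); last first.
  exists g => [[[u v] w] _|D _].
    rewrite /g /h /= mk0 mk1 mk2. done.
  apply/ffunP => x; rewrite /h /g /= ffunE.
  by case: (I3_cases x) => ->.
transitivity (\sum_(p : 'I_2 * 'I_2) \sum_(w : 'I_2) F (h (p, w))).
  by rewrite pair_bigA /=; apply: eq_bigr => -[[u v] w].
rewrite -(pair_bigA _ (fun u v => \sum_w F (h ((u, v), w)))) /=.
done.
Qed.

Section S.
Variable R : realType.
Definition qd (mu : {ffun 'I_3 -> R}) (D : detmap) (y : 'I_2) : R := \sum_x mu x * (D x == y)%:R.
Definition ent (a b : R) : R := - (a * log2 a + b * log2 b).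
Lemma log2V (q : R) : 0 <= q -> log2 (1 / q) = - log2 q.
Proof.
rewrite /log2 mul1r le_eqVlt => /orP [/eqP <-|q0].
  by rewrite invr0 ln0 // mul0r oppr0.
by rewrite lnV ?posrE // mulNr.
Qed.
Lemma MI_det (mu : {ffun 'I_3 -> R}) (D : detmap) : (forall x, 0 <= mu x) ->
  MI mu (detmx R D) = ent (qd mu D o0) (qd mu D o1).
Proof.
move=> mu0.
have qd0 y : 0 <= qd mu D y by apply: sumr_ge0 => x _; rewrite mulr_ge0.
have KLe x : KL (row x (detmx R D)) (outdist mu (detmx R D)) = \sum_y (D x == y)%:R * - log2 (qd mu D y).
  apply: eq_bigr => y _; rewrite !mxE.
  have -> : \sum_x0 mu x0 * detmx R D x0 y = qd mu D y by apply: eq_bigr => z _; rewrite mxE.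
  case: (D x == y) => /=; last by rewrite eqxx mul0r.
  rewrite oner_eq0 log2V // !mul1r //.
rewrite /MI (eq_bigr _ (fun x _ => congr1 (fun t => mu x * t) (KLe x))).
under eq_bigr do rewrite mulr_sumr.
rewrite exchange_big /= sum2 /ent /qd !mulr_suml.
under eq_bigr do rewrite mulrA.
under [X in _ + X = _]eq_bigr do rewrite mulrA.
rewrite opprD -!sumrN; congr (_ + _); apply: eq_bigr => i _; by rewrite mulrN.
Qed.
Lemma ln_le_sub1 (x : R) : 0 < x -> ln x <= x - 1.
Proof. move=> x0; have := expR_ge1Dx (ln x); rewrite lnK ?posrE //; lra. Qed.
Lemma gibbs (q r : R) : 0 <= q -> 0 < r -> - q * ln q <= - q * ln r + r - q.
Proof.
move=> q0 r0; move: q0; rewrite le_eqVlt => /orP [/eqP <-|qp].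
  rewrite oppr0 !mul0r; lra.
have := ln_le_sub1 _ (divr_gt0 r0 qp).
rewrite ln_div ?posrE // => H.
have := ler_wpM2l (ltW qp) H.
have -> : q * (r / q - 1) = r - q by field; rewrite gt_eqF.
rewrite mulrBr !mulNr; lra.
Qed.
Lemma ln2_gt0 : 0 < ln (2:R). Proof. apply: ln_gt0; lra. Qed.
Lemma ln23 : ln (2:R) <= ln 3 /\ ln (3:R) *+ 3 < ln 2 *+ 5.
Proof.
split; first by rewrite ler_ln ?posrE //; lra.
rewrite -!lnXn //; rewrite ltr_ln ?posrE ?exprn_gt0 //; last lra.
Qed.
Definition eta : R := 5/3 - ln 3 / ln 2.
Lemma eta_bounds : 0 < eta /\ eta <= 1.
Proof.
have l2 := ln2_gt0; have [l3 l35] := ln23.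
have e3 : ln (3:R) *+ 3 = 3 * ln 3 by rewrite mulr_natl.
have e5 : ln (2:R) *+ 5 = 5 * ln 2 by rewrite mulr_natl.
rewrite e3 e5 in l35.
rewrite /eta; split.
  rewrite subr_gt0 ltr_pdivrMr //. lra.
rewrite lerBlDr -lerBlDl ler_pdivlMr //. lra.
Qed.
Lemma entE' a b : ent a b = (- a * ln a + - b * ln b) / ln 2.
Proof. rewrite /ent /log2; field.
by rewrite gt_eqF //; exact: ln2_gt0.
Qed.
Lemma ent_le1 (a b : R) : 0 <= a -> 0 <= b -> a + b = 1 -> ent a b <= 1.
Proof.
move=> a0 b0 ab; rewrite entE' ler_pdivrMr; last exact: ln2_gt0.
rewrite mul1r.
have h2 : 0 < (2:R)^-1 by rewrite invr_gt0; lra.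
have := gibbs _ _ a0 h2; have := gibbs _ _ b0 h2.
rewrite lnV ?posrE; last lra.
have : a * ln 2 + b * ln 2 = ln (2:R) by rewrite -mulrDl ab mul1r.
lra.
Qed.
Lemma ent_le_eta (a b : R) : 0 <= a -> 0 <= b -> a + b = 1 -> a <= 1/3 -> ent a b <= 1 - eta.
Proof.
move=> a0 b0 ab a3; rewrite entE' ler_pdivrMr; last exact: ln2_gt0.
have -> : (1 - eta) * ln 2 = ln 3 - 2/3 * ln (2:R).
  rewrite /eta; field. by rewrite gt_eqF //; exact: ln2_gt0.
have h3 : 0 < (3:R)^-1 by rewrite invr_gt0; lra.
have h23 : 0 < (2:R) / 3 by lra.
have := gibbs _ _ a0 h3; have := gibbs _ _ b0 h23.
rewrite lnV ?posrE; last lra.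
rewrite ln_div ?posrE; try lra.
have : a * ln 3 + b * ln 3 = ln (3:R) by rewrite -mulrDl ab mul1r.
have : 2/3 * ln 2 <= b * ln (2:R) by rewrite ler_wpM2r //; [exact: ltW ln2_gt0 | lra].
lra.
Qed.
Lemma entC (a b : R) : ent a b = ent b a.
Proof. by rewrite /ent addrC. Qed.
Lemma qdE mu u v w y : qd mu (mk u v w) y = mu x0 * (u == y)%:R + mu x1 * (v == y)%:R + mu x2 * (w == y)%:R.
Proof. by rewrite /qd sum3 mk0 mk1 mk2. Qed.
Lemma ent10 : ent 1 0 = 0.
Proof. by rewrite /ent /log2 ln1 !mul0r mulr0 addr0 oppr0. Qed.
Lemma ent01 : ent 0 1 = 0.
Proof. by rewrite entC ent10. Qed.
Definition delta (W : 'M[R]_(3,2)) := Num.min (Num.min `|W x1 o0 - W x2 o1| `|W x0 o0 - W x2 o1|) `|W x0 o0 - W x1 o1|.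
Lemma Wentry (W : 'M[R]_(3,2)) lam : W = \sum_D lam D *: detmx R D -> forall x y, W x y = \sum_D lam D * (D x == y)%:R.
Proof.
move=> HW x y; rewrite HW summxE; apply: eq_bigr => D _; by rewrite !mxE.
Qed.
Ltac simpD H := rewrite sumD !sum2 ?mk0 ?mk1 ?mk2 ?e00 ?e01 ?e10 ?e11 /= ?mulr0 ?mulr1 ?addr0 ?add0r in H.
Lemma V_bound (W : 'M[R]_(3,2)) (lam : {ffun detmap -> R}) (mu : {ffun 'I_3 -> R}) :
  lam \in Lambda W -> is_distr mu ->
  \sum_D lam D * MI mu (detmx R D) <= 1 - eta * delta W.
Proof.
rewrite inE => -[[lam0 lam1] HW] [mu0 mu1].
rewrite sum3 in mu1.
under eq_bigr do rewrite MI_det //.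
rewrite sumD !sum2 !qdE !e00 !e01 !e10 !e11 /= !mulr0 !mulr1 !addr0 !add0r mu1 ent10 ent01 !mulr0 !add0r.
have We := Wentry _ _ HW.
rewrite (entC (mu x0 + mu x1)) (entC (mu x0 + mu x2)) (entC (mu x1 + mu x2)).
have w00 := We x0 o0; have w10 := We x1 o0; have w11 := We x1 o1; have w21 := We x2 o1.
simpD w00. simpD w10. simpD w11. simpD w21. simpD lam1.
have [et0 et1] := eta_bounds.
have l000 := lam0 (mk o0 o0 o0); have l001 := lam0 (mk o0 o0 o1); have l010 := lam0 (mk o0 o1 o0); have l011 := lam0 (mk o0 o1 o1).
have l100 := lam0 (mk o1 o0 o0); have l101 := lam0 (mk o1 o0 o1); have l110 := lam0 (mk o1 o1 o0); have l111 := lam0 (mk o1 o1 o1).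
have m0 := mu0 x0; have m1 := mu0 x1; have m2 := mu0 x2.
have E0 : ent (mu x0) (mu x1 + mu x2) <= 1 by apply: ent_le1; lra.
have E1 : ent (mu x1) (mu x0 + mu x2) <= 1 by apply: ent_le1; lra.
have E2 : ent (mu x2) (mu x0 + mu x1) <= 1 by apply: ent_le1; lra.
have hc : eta * (lam (mk o0 o0 o0) + lam (mk o1 o1 o1)) <= 1 * (lam (mk o0 o0 o0) + lam (mk o1 o1 o1)).
  by apply: ler_wpM2r => //; lra.
have : mu x0 <= 1/3 \/ (mu x1 <= 1/3 \/ mu x2 <= 1/3).
  case: (lerP (mu x0) (1/3)) => h0; first by left.
  case: (lerP (mu x1) (1/3)) => h1; first by right; left.
  right; right; lra.
case=> [h|[h|h]].
- have F0 : ent (mu x0) (mu x1 + mu x2) <= 1 - eta by apply: ent_le_eta; lra.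
  have d : delta W <= `|W x1 o0 - W x2 o1| by rewrite /delta !ge_min lexx.
  have g : `|W x1 o0 - W x2 o1| <= lam (mk o0 o0 o0) + lam (mk o1 o1 o1) + (lam (mk o0 o1 o1) + lam (mk o1 o0 o0)).
    rewrite ler_norml w10 w21; apply/andP; split; lra.
  have hd := ler_wpM2l (ltW et0) (le_trans d g).
  have p1 := ler_wpM2l l011 F0; have p2 := ler_wpM2l l100 F0.
  have p3 := ler_wpM2l l001 E2; have p4 := ler_wpM2l l110 E2.
  have p5 := ler_wpM2l l010 E1; have p6 := ler_wpM2l l101 E1.
  lra.
- have F1 : ent (mu x1) (mu x0 + mu x2) <= 1 - eta by apply: ent_le_eta; lra.
  have d : delta W <= `|W x0 o0 - W x2 o1| by rewrite /delta !ge_min lexx /= ?orbT.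
  have g : `|W x0 o0 - W x2 o1| <= lam (mk o0 o0 o0) + lam (mk o1 o1 o1) + (lam (mk o0 o1 o0) + lam (mk o1 o0 o1)).
    rewrite ler_norml w00 w21; apply/andP; split; lra.
  have hd := ler_wpM2l (ltW et0) (le_trans d g).
  have p1 := ler_wpM2l l011 E0; have p2 := ler_wpM2l l100 E0.
  have p3 := ler_wpM2l l001 E2; have p4 := ler_wpM2l l110 E2.
  have p5 := ler_wpM2l l010 F1; have p6 := ler_wpM2l l101 F1.
  lra.
- have F2 : ent (mu x2) (mu x0 + mu x1) <= 1 - eta by apply: ent_le_eta; lra.
  have d : delta W <= `|W x0 o0 - W x1 o1| by rewrite /delta !ge_min lexx /= ?orbT.
  have g : `|W x0 o0 - W x1 o1| <= lam (mk o0 o0 o0) + lam (mk o1 o1 o1) + (lam (mk o0 o0 o1) + lam (mk o1 o1 o0)).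
    rewrite ler_norml w00 w11; apply/andP; split; lra.
  have hd := ler_wpM2l (ltW et0) (le_trans d g).
  have p1 := ler_wpM2l l011 E0; have p2 := ler_wpM2l l100 E0.
  have p3 := ler_wpM2l l001 F2; have p4 := ler_wpM2l l110 F2.
  have p5 := ler_wpM2l l010 E1; have p6 := ler_wpM2l l101 E1.
  lra.
Qed.
Lemma log2_rank_le1 (D : detmap) : log2 (\rank (detmx R D))%:R <= (1:R).
Proof.
have := rank_leq_col (detmx R D).
case: (\rank _) => [|[|[|n]]] // _.
- by rewrite /log2 ln0 // mul0r.
- by rewrite /log2 ln1 mul0r.
- rewrite /log2 divff //; by rewrite gt_eqF //; exact: ln2_gt0.
Qed.
Lemma C11_le1 (lam : {ffun detmap -> R}) : is_distr lam -> C11 lam <= 1.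
Proof.
move=> [l0 l1]; rewrite /C11; apply: (le_trans (y := \sum_D lam D)); last by rewrite l1.
apply: ler_sum => D _.
by rewrite -[leRHS]mulr1; apply: ler_wpM2l => //; exact: log2_rank_le1.
Qed.
Lemma rank2 (D : detmap) (xa xb : 'I_3) : D xa = o0 -> D xb = o1 -> \rank (detmx R D) = 2%N.
Proof.
move=> Da Db; apply/eqP; rewrite eqn_leq rank_leq_col /=.
pose B : 'M[R]_(2,3) := \matrix_(i, x) (x == (if val i == 0%N then xa else xb))%:R.
have sel (s : 'I_3) (f : 'I_3 -> R) : \sum_x (x == s)%:R * f x = f s.
  rewrite (bigD1 s) //= eqxx mul1r big1 ?addr0 // => x /negbTE ->; by rewrite mul0r.
have HB : B *m detmx R D = 1%:M.
  apply/matrixP => i j; rewrite !mxE.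
  under eq_bigr do rewrite !mxE.
  rewrite sel.
  by case: (I2_cases i) => ->; case: (I2_cases j) => -> /=; rewrite ?Da ?Db.
apply: (leq_trans _ (mxrankM_maxr B (detmx R D))).
by rewrite HB mxrank1.
Qed.
Lemma maxcase (t : R) : (Num.max 0 t = 0 /\ t <= 0) \/ (Num.max 0 t = t /\ 0 <= t).
Proof.
case: (lerP 0 t) => h; [right | left]; split => //; last exact: ltW.
Qed.
Section Star.
Variable W : 'M[R]_(3,2).
Let a0 := W x0 o0.
Let a1 := W x1 o0.
Let a2 := W x2 o0.
Let m0 := Num.max 0 (a1 + a2 - 1).
Let m1 := Num.max 0 (a0 + a2 - 1).
Let m2 := Num.max 0 (a0 + a1 - 1).
Let sg := a0 + a1 + a2 - 1 - (m0 + m1 + m2).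
Let y0 := m0 + sg / 3.
Let y1 := m1 + sg / 3.
Let y2 := m2 + sg / 3.
Let z0 := 1 - a1 - a2 + y0.
Let z1 := 1 - a0 - a2 + y1.
Let z2 := 1 - a0 - a1 + y2.
Definition fsel (u v w : 'I_2) : R :=
  if u == o0 then (if v == o0 then (if w == o0 then 0 else y2) else (if w == o0 then y1 else z0))
  else (if v == o0 then (if w == o0 then y0 else z1) else (if w == o0 then z2 else 0)).
Definition lamstar : {ffun detmap -> R} := [ffun D : detmap => fsel (D x0) (D x1) (D x2)].
Lemma lamstarE u v w : lamstar (mk u v w) = fsel u v w.
Proof. by rewrite ffunE mk0 mk1 mk2. Qed.
Hypothesis Wch : is_channel W.
Hypothesis Wcol : forall j : 'I_2, 1 <= \sum_i W i j.
Lemma Wrow i : W i o1 = 1 - W i o0.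
Proof. have [_] := Wch i; rewrite sum2 !mxE; lra. Qed.
Lemma Wnn i j : 0 <= W i j.
Proof. by have [h _] := Wch i; have := h j; rewrite mxE. Qed.
Lemma star_facts : (0 <= y0 /\ 0 <= y1 /\ 0 <= y2) /\ (0 <= z0 /\ 0 <= z1 /\ 0 <= z2).
Proof.
have c0 := Wcol o0; have c1 := Wcol o1; rewrite !sum3 !Wrow in c1; rewrite sum3 in c0.
have := Wnn x0 o0; have := Wnn x1 o0; have := Wnn x2 o0.
have := Wnn x0 o1; have := Wnn x1 o1; have := Wnn x2 o1; rewrite !Wrow.
rewrite /z0 /z1 /z2 /y0 /y1 /y2 /sg /m0 /m1 /m2 /a0 /a1 /a2.
case: (maxcase (W x1 o0 + W x2 o0 - 1)) => -[-> ?];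
case: (maxcase (W x0 o0 + W x2 o0 - 1)) => -[-> ?];
case: (maxcase (W x0 o0 + W x1 o0 - 1)) => -[-> ?]; move=> *; split; lra.
Qed.
Lemma lamstar_distr : is_distr lamstar.
Proof.
have [[? [? ?]] [? [? ?]]] := star_facts.
split.
  move=> D; rewrite ffunE /fsel.
  by repeat case: ifP => _.
rewrite sumD !sum2 !lamstarE /fsel ?e00 ?e01 ?e10 ?e11 /=.
rewrite /z0 /z1 /z2 /y0 /y1 /y2 /sg; lra.
Qed.
Lemma lamstar_dec : W = \sum_D lamstar D *: detmx R D.
Proof.
apply/matrixP => i j; rewrite summxE.
under eq_bigr do rewrite !mxE.
rewrite sumD !sum2 !lamstarE /fsel ?e00 ?e01 ?e10 ?e11 /=.
case: (I3_cases i) => ->; case: (I2_cases j) => ->;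
rewrite ?mk0 ?mk1 ?mk2 ?e00 ?e01 ?e10 ?e11 /= ?Wrow;
rewrite /z0 /z1 /z2 /y0 /y1 /y2 /sg /a0 /a1 /a2; lra.
Qed.
Lemma log2_2 : log2 (2%N%:R : R) = 1.
Proof. rewrite /log2 divff //; by rewrite gt_eqF //; exact: ln2_gt0. Qed.
Lemma C11_star : C11 lamstar = 1.
Proof.
have [_ s1] := lamstar_distr.
rewrite sumD !sum2 !lamstarE /fsel ?e00 ?e01 ?e10 ?e11 /= in s1.
rewrite /C11 sumD !sum2 !lamstarE /fsel ?e00 ?e01 ?e10 ?e11 /=.
rewrite (rank2 (mk o0 o0 o1) x0 x2 (mk0 _ _ _) (mk2 _ _ _)).
rewrite (rank2 (mk o0 o1 o0) x0 x1 (mk0 _ _ _) (mk1 _ _ _)).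
rewrite (rank2 (mk o0 o1 o1) x0 x1 (mk0 _ _ _) (mk1 _ _ _)).
rewrite (rank2 (mk o1 o0 o0) x1 x0 (mk1 _ _ _) (mk0 _ _ _)).
rewrite (rank2 (mk o1 o0 o1) x1 x0 (mk1 _ _ _) (mk0 _ _ _)).
rewrite (rank2 (mk o1 o1 o0) x2 x0 (mk2 _ _ _) (mk0 _ _ _)).
rewrite log2_2 !mul0r !mulr1; lra.
Qed.
End Star.
Lemma main_S (W : 'M[R]_(3, 2)) :
  is_channel W ->
  (forall (i i' : 'I_3) (j j' : 'I_2), W i j = W i' j' -> i = i' /\ j = j') ->
  (forall j : 'I_2, 1 <= \sum_i W i j) ->
  Cbar01 W < Cbar11 W.
Proof.
move=> Wch Wd Wcol.
have gap (i i' : 'I_3) j j' : i != i' -> 0 < `|W i j - W i' j'|.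
  move=> ne; rewrite normr_gt0 subr_eq0; apply/eqP => /Wd [e _]; by rewrite e eqxx in ne.
have dpos : 0 < delta W by rewrite /delta !lt_min !gap.
have [et0 et1] := eta_bounds.
have mu3 : is_distr ([ffun=> 3^-1] : {ffun 'I_3 -> R}).
  split.
    move=> t; rewrite ffunE invr_ge0; lra.
  rewrite (sum3 _ (fun t => [ffun=> (3:R)^-1] t)) !ffunE; field.
  done.
have LS : Lambda W (lamstar W) by split; [exact: lamstar_distr | exact: lamstar_dec].
have H01 : Cbar01 W <= 1 - eta * delta W.
  apply: ge_sup; first by exists (C01 (lamstar W)), (lamstar W).
  move=> _ [lam Llam <-]; apply: ge_sup; first by exists (\sum_D lam D * MI [ffun=> (3:R)^-1] (detmx R D)), [ffun=> (3:R)^-1].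
  move=> _ [mu Hmu <-]; apply: V_bound => //; exact: mem_set.
have H11 : 1 <= Cbar11 W.
  rewrite -(C11_star _ Wch Wcol).
  apply: sup_upper_bound; last by exists (lamstar W).
  rewrite /has_sup.
  split.
    by exists (C11 (lamstar W)), (lamstar W).
  exists 1.
  move=> _ [lam [Hl _] <-]; exact: C11_le1.
apply: (le_lt_trans H01); apply: (lt_le_trans _ H11).
have := mulr_gt0 et0 dpos; lra.
Qed.
End S.

Theorem proposition24 (R : realType) (W : 'M[R]_(3, 2)) :
  is_channel W ->
  (forall (i i' : 'I_3) (j j' : 'I_2), W i j = W i' j' -> i = i' /\ j = j') ->
  (forall j : 'I_2, 1 <= \sum_i W i j) ->
  Cbar01 W < Cbar11 W.
Proof. exact: main_S. Qed.
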